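(* Let $\mathcal{L}$ be a (one-sorted) relational language and $\mathcal{M}$ an $\mathcal{L}$-structure. If $\mathcal{M}$ has an $\equiv^{\mathcal{M}}$-equivalence class of size $\kappa$, then $\mathrm{Aut}(\mathcal{M})$ has a subgroup isomorphic to $\mathrm{Perm}(\kappa)$, the group of all permutations of $\kappa$.
   Context: Let $\Phi$ be the collection of atomic formulas of the form $R(z_1,\dots,z_k)$ with $R$ a relation symbol of $\mathcal{L}$ and each $z_j$ a variable. For $a,b\in\mathcal{M}$, $\mathcal{M}\models a\equiv b$ means: for every $\psi(x,\mathbf{y})\in\Phi$ ($x$ a single variable) and every tuple $\mathbf{c}$ in $\mathcal{M}$, $\mathcal{M}\models\psi(a,\mathbf{c})\leftrightarrow\psi(b,\mathbf{c})$; this defines an equivalence relation $\equiv^{\mathcal{M}}$. *)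

(* Defs.v *)
From mathcomp Require Import all_boot.
Set Implicit Arguments. Unset Strict Implicit. Unset Printing Implicit Defensive.

Record language := Language { rsym : Type; arity : rsym -> nat }.

Record structure (L : language) := Structure {
  carrier :> Type;
  interp : forall R : rsym L, ('I_(arity R) -> carrier) -> Prop }.

(* Atomic formula R(z_1,...,z_k) with variables indexed by nat;
   variable 0 plays the role of the distinguished single variable x,
   the other variables form the parameter tuple y. *)
Record atomic (L : language) := Atomic {
  at_sym : rsym L;
  at_vars : 'I_(arity at_sym) -> nat }.

Definition sat_at (L : language) (M : structure L) (psi : atomic L)
  (a : M) (c : nat -> M) : Prop :=
  @interp L M (at_sym psi)
    (fun j => if @at_vars L psi j == 0 then a else c (@at_vars L psi j)).

Definition aequiv (L : language) (M : structure L) (a b : M) : Prop :=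
  forall (psi : atomic L) (c : nat -> M), sat_at psi a c <-> sat_at psi b c.

Definition bijective_map (A B : Type) (f : A -> B) : Prop :=
  exists g : B -> A, (forall x, g (f x) = x) /\ (forall y, f (g y) = y).

Definition is_aut (L : language) (M : structure L) (f : M -> M) : Prop :=
  bijective_map f /\
  forall (R : rsym L) (t : 'I_(arity R) -> M), @interp L M R t <-> @interp L M R (f \o t).

(* Main.v *)
Require Import Defs.
From mathcomp Require Import all_boot.
From Stdlib Require Import ClassicalEpsilon FunctionalExtensionality.
Set Implicit Arguments.

Lemma aequiv_sym L (M : structure L) (x y : M) : aequiv x y -> aequiv y x.
Proof. move=> H psi c; split=> ?; by apply/(H psi c). Qed.

Lemma aequiv_trans L (M : structure L) (x y z : M) :
  aequiv x y -> aequiv y z -> aequiv x z.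
Proof. move=> H1 H2 psi c; split=> ?; [apply/H2/H1 | apply/H1/H2]; done. Qed.

Lemma interp_aequiv L (M : structure L) (R : rsym L) (t t' : 'I_(arity R) -> M) :
  (forall j, aequiv (t j) (t' j)) -> interp t <-> interp t'.
Proof.
move=> Ht.
pose u n := fun j : 'I_(arity R) => if (j < n)%N then t' j else t j.
have u0 : u 0%N = t by apply: functional_extensionality => j; rewrite /u.
have uA : u (arity R) = t' by apply: functional_extensionality => j; rewrite /u ltn_ord.
suff H : forall n, interp t <-> interp (u n) by rewrite (H (arity R)) uA.
elim=> [|n IH]; first by rewrite u0.
rewrite IH.
case: (ltnP n (arity R)) => [ltn|len]; last first.
  have -> : u n.+1 = u n.
    apply: functional_extensionality => j; rewrite /u.
    have h1 : (j < n)%N by apply: leq_trans (ltn_ord j) len.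
    by rewrite h1 ltnS (ltnW h1).
  done.
pose n0 := Ordinal ltn.
pose psi := @Atomic L R (fun j : 'I_(arity R) => if j == n0 then 0%N else j.+1).
pose c := fun k : nat => if @insub _ (fun i => (i < arity R)%N) 'I_(arity R) k.-1 is Some j then u n j else t n0.
have Hx : forall x, sat_at psi x c <-> interp (fun j => if j == n0 then x else u n j).
  move=> x; rewrite /sat_at /=.
  suff -> : (fun j : 'I_(arity R) => if (if j == n0 then 0%N else j.+1) == 0%N then x else c (if j == n0 then 0%N else j.+1))
    = (fun j => if j == n0 then x else u n j) by [].
  apply: functional_extensionality => j.
  case: (j == n0) => //=.
  rewrite /c /= (insubT (fun i => (i < arity R)%N) (ltn_ord j)) /=.
  by congr (u n); apply: val_inj.
have E1 : (fun j => if j == n0 then t n0 else u n j) = u n.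
  apply: functional_extensionality => j; case: eqP => // ->.
  by rewrite /u /= ltnn.
have E2 : (fun j => if j == n0 then t' n0 else u n j) = u n.+1.
  apply: functional_extensionality => j; case: eqP => [->|/eqP ne].
    by rewrite /u /= ltnSn.
  have ne' : (nat_of_ord j != n).
    apply/negP => /eqP h; move/negP: ne; apply; apply/eqP; apply: val_inj; exact: h.
  by rewrite /u (ltnS j n) (@leq_eqVlt j n) (negbTE ne').
rewrite -E1 -E2 -!Hx.
exact: (Ht n0 psi c).
Qed.

Section H.
Variables (L : language) (M : structure L) (K : Type) (e : K -> M).

Definition inv (m : M) : option K :=
  match excluded_middle_informative (exists k, e k = m) with
  | left H => Some (proj1_sig (constructive_indefinite_description _ H))
  | right _ => None
  end.

Lemma inv_e (inj : forall k1 k2, e k1 = e k2 -> k1 = k2) k : inv (e k) = Some k.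
Proof.
rewrite /inv; case: excluded_middle_informative => [H|H]; last by case: H; exists k.
case: constructive_indefinite_description => /= x Hx; by rewrite (inj _ _ Hx).
Qed.

Lemma inv_None m : inv m = None -> forall k, e k <> m.
Proof.
rewrite /inv; case: excluded_middle_informative => // H _ k Hk; apply: H; by exists k.
Qed.

Definition hh (s : K -> K) (m : M) : M :=
  match inv m with Some k => e (s k) | None => m end.

End H.

Theorem corollary5p3 (L : language) (M : structure L) (K : Type) (a : M)
    (e : K -> M) :
  (forall k1 k2, e k1 = e k2 -> k1 = k2) ->
  (forall m : M, aequiv m a <-> exists k, e k = m) ->
  exists h : (K -> K) -> (M -> M),
    (forall s, bijective_map s -> is_aut (h s)) /\
    (forall s t, bijective_map s -> bijective_map t ->
       forall m, h (s \o t) m = (h s \o h t) m) /\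
    (forall s t, bijective_map s -> bijective_map t ->
       (forall m, h s m = h t m) -> forall k, s k = t k).
Proof.
move=> inj cls.
have hcase : forall m, (exists k, m = e k /\ @inv _ M _ e m = Some k) \/ @inv _ M _ e m = None.
  move=> m; case E: (@inv _ M _ e m) => [k|]; last by right.
  left; exists k; move: E; rewrite /inv; case: excluded_middle_informative => // H [<-].
  by case: constructive_indefinite_description.
exists (@hh _ M _ e); split; [|split].
- move=> s [g [gs sg]]; split.
    have ie := @inv_e _ M _ e inj.
    exists (@hh _ M _ e g); split=> m; case: (hcase m) => [[k [-> _]]|E].
    - by rewrite /hh ie ie gs.
    - by rewrite /hh E E.
    - by rewrite /hh ie ie sg.
    - by rewrite /hh E E.
  have ie := @inv_e _ M _ e inj.
  move=> R t; apply: interp_aequiv => j /=.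
  case: (hcase (t j)) => [[k [-> _]]|E]; rewrite /hh ?ie ?E //.
  apply: (aequiv_trans (y := a)); first by apply/cls; exists k.
  by apply: aequiv_sym; apply/cls; exists (s k).
- have ie := @inv_e _ M _ e inj.
  move=> s t _ _ m; case: (hcase m) => [[k [-> _]]|E]; rewrite /hh /= ?ie ?E //.
- move=> s t _ _ H k; apply: (inj); have := H (e k); by rewrite /hh (@inv_e _ M _ e inj).
Qed.
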